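(* Let $n=n_1+\dots+n_k+\tilde n$ with $n_i\ge1$, $\tilde n\ge 0$, and let $M$ be the corresponding standard Levi subgroup of $\mathrm{SO}_{2n+1}(F)$, identified with $\mathrm{GL}_{n_1}(F)\times\cdots\times\mathrm{GL}_{n_k}(F)\times\mathrm{SO}_{2\tilde n+1}(F)$. Then $M\cap\mathrm{J}^+=\mathrm{GL}_{n_1}(\mathcal{O})\times\cdots\times\mathrm{GL}_{n_k}(\mathcal{O})\times\mathrm{J}^+_{2\tilde n+1}$, where $\mathrm{J}^+_{2\tilde n+1}$ is the paramodular subgroup of $\mathrm{SO}_{2\tilde n+1}(F)$.
   Context: $F$ non-archimedean local field of characteristic $0$, ring of integers $\mathcal{O}$, $\mathfrak{p}=\varpi\mathcal{O}$, residue field $k$. $V_n$ has basis $\mathcal{B}_0=(e_1,\dots,e_n,v_0,f_n,\dots,f_1)$ with $\langle e_i,f_j\rangle=\delta_{ij}$, $\langle v_0,v_0\rangle=2$, other pairings $0$, $q(x)=\langle x,x\rangle/2$, $\mathrm{SO}_{2n+1}(F)=\mathrm{SO}(V_n,q)$. The Levi $M$ consists of elements whose matrix in $\mathcal{B}_0$ is block diagonal $\mathrm{diag}(C_1,\dots,C_k,D,{}^\tau C_k^{-1},\dots,{}^\tau C_1^{-1})$ with $C_i\in\mathrm{GL}_{n_i}(F)$, ${}^\tau$ the transpose with respect to the antidiagonal, and $D\in\mathrm{SO}(V_{\tilde n})$ where $V_{\tilde n}$ is spanned by $e_{n'+1},\dots,e_n,v_0,f_n,\dots,f_{n'+1}$,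 $n'=n_1+\dots+n_k$; this gives the identification. Paramodular subgroup, defined for any such space with basis $(e_1,\dots,e_m,v_0,f_m,\dots,f_1)$: $L=\oplus\mathcal{O}e_i\oplus\oplus\varpi\mathcal{O}f_i\oplus\varpi\mathcal{O}v_0$, $\mathrm{J}=\{g\in\mathrm{SO}:g(L)=L\}$; for $g\in\mathrm{J}$, reducing its action on $L$ modulo $\mathfrak{p}$ and passing to the quotient of $L/\mathfrak{p}L$ by the kernel (spanned by the image of $\varpi v_0$) of the form induced by $q/\varpi$ gives $\bar g$ in a $2m$-dimensional orthogonal group; $\alpha(g)=\det\bar g$ if $\mathrm{char}\,k\ne2$, the Dickson–Dieudonné determinant of $\bar g$ if $\mathrm{char}\,k=2$; $\mathrm{J}^+=\ker\alpha$. $\mathrm{J}^+=\mathrm{J}^+_{2n+1}$ for $V_n$ and $\mathrm{J}^+_{2\tilde n+1}$ for $V_{\tilde n}$. *)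

(* Defs.v *)
From HB Require Import structures.
From mathcomp Require Import all_boot all_order all_algebra.
From mathcomp Require Import zify.
Set Implicit Arguments. Unset Strict Implicit. Unset Printing Implicit Defensive.
Import Order.TTheory GRing.Theory Num.Theory.
Local Open Scope ring_scope.

Section LocalField.
Variables (F : fieldType) (v : F -> int).

(* v is a normalized discrete valuation on F^x (value at 0 is irrelevant) *)
Definition is_dvaluation : Prop :=
  [/\ forall x y : F, x != 0 -> y != 0 -> v (x * y) = v x + v y,
      forall x y : F, x != 0 -> y != 0 -> x + y != 0 ->
        Num.min (v x) (v y) <= v (x + y)
    & exists t : F, t != 0 /\ v t = 1].

Definition inO (x : F) : bool := (x == 0) || (0 <= v x).
Definition inP (x : F) : bool := (x == 0) || (0 < v x).

Definition vsmall (x : F) (N : int) : bool := (x == 0) || (N <= v x).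

Definition v_complete : Prop :=
  forall u : nat -> F,
    (forall N : int, exists m, forall i j, (m <= i)%N -> (m <= j)%N ->
        vsmall (u i - u j) N) ->
    exists l : F, forall N : int, exists m, forall i, (m <= i)%N -> vsmall (u i - l) N.

Definition residue_map (k : fieldType) (red : F -> k) : Prop :=
  [/\ red 1 = 1,
      forall x y, inO x -> inO y -> red (x + y) = red x + red y,
      forall x y, inO x -> inO y -> red (x * y) = red x * red y,
      forall x, inO x -> (red x == 0) = inP x
    & forall c : k, exists x, inO x /\ red x = c].

Definition nonarch_local_field_char0 (k : finFieldType) (red : F -> k) : Prop :=
  [/\ [pchar F] =i pred0, is_dvaluation, v_complete & residue_map red].

(* ---------- the orthogonal space V_m with basis
   (e_1..e_m, v0, f_m..f_1), indices 0..2m; e_i at i-1, v0 at m, f_i at 2m+1-i.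
   Matrices act on column vectors of coordinates. *)
Definition gram (m : nat) : 'M[F]_(m.*2.+1) :=
  \matrix_(i, j) if (i + j == m.*2)%N then (if i == inord m then 2%:R else 1) else 0.

Definition inSO (m : nat) (g : 'M[F]_(m.*2.+1)) : bool :=
  (g^T *m gram m *m g == gram m) && (\det g == 1).

Definition inL (m : nat) (x : 'cV[F]_(m.*2.+1)) : bool :=
  [forall i : 'I_(m.*2.+1), if (i < m)%N then inO (x i 0) else inP (x i 0)].

Definition inJ (m : nat) (g : 'M[F]_(m.*2.+1)) : Prop :=
  [/\ inSO g,
      forall x, inL x -> inL (g *m x)
    & forall y, inL y -> exists x, inL x /\ g *m x = y].

Variables (k : finFieldType) (red : F -> k) (w : F).

(* w = uniformizer; basis of L : (e_i, w v0, w f_i); scaling factors *)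
Definition dsc (m : nat) (i : 'I_(m.*2.+1)) : F := if (i < m)%N then 1 else w.

(* reduction mod p of g|_L, then passing to the quotient by the kernel
   line (image of w v0, index m) of the form induced by q/w *)
Definition gbar (m : nat) (g : 'M[F]_(m.*2.+1)) : 'M[k]_(m.*2) :=
  let mid : 'I_(m.*2.+1) := inord m in
  \matrix_(i, j) red (g (lift mid i) (lift mid j) * dsc (lift mid j)
                       / dsc (lift mid i)).

(* alpha(g) trivial: det (char k <> 2), Dickson invariant
   rank(1 - gbar) mod 2 (char k = 2) *)
Definition alpha_trivial (m : nat) (g : 'M[F]_(m.*2.+1)) : bool :=
  if (2%:R == 0 :> k) then ~~ odd (\rank (1%:M - gbar g))
  else \det (gbar g) == 1.

Definition inJplus (m : nat) (g : 'M[F]_(m.*2.+1)) : Prop :=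
  inJ g /\ alpha_trivial g.

Definition inGLO (a : nat) (A : 'M[F]_a) : Prop :=
  [/\ A \in unitmx, forall i j, inO (A i j) & forall i j, inO (invmx A i j)].

End LocalField.

Definition antitr (R : Type) (a : nat) (A : 'M[R]_a) : 'M[R]_a :=
  \matrix_(i, j) A (rev_ord j) (rev_ord i).

Lemma levi_size (a b : nat) : (a + (b.*2.+1 + a))%N = (a + b).*2.+1.
Proof. rewrite doubleD -!addnn; lia. Qed.

Definition levi (F : fieldType) (a b : nat) (C : 'M[F]_a) (D : 'M[F]_(b.*2.+1))
  : 'M[F]_((a + b).*2.+1) :=
  castmx (levi_size a b, levi_size a b)
    (block_mx C 0 0 (block_mx D 0 0 (antitr (invmx C)))).

Definition blockdiag (F : fieldType) (r : nat) (p : 'I_r -> nat)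
  (C : forall i : 'I_r, 'M[F]_(p i)) : 'M[F]_(\sum_(i < r) p i) :=
  @mxdiag F r p C.

(* Main.v *)
Require Import Defs.
From HB Require Import structures.
From mathcomp Require Import all_boot all_order all_algebra all_fingroup.
From mathcomp Require Import zify.
Set Implicit Arguments. Unset Strict Implicit. Unset Printing Implicit Defensive.
Import Order.TTheory GRing.Theory Num.Theory.
Local Open Scope ring_scope.
Definition vmulP (F : fieldType) (v : F -> int) :=
  forall x y : F, x != 0 -> y != 0 -> v (x * y) = v x + v y.
Definition vminP (F : fieldType) (v : F -> int) :=
  forall x y : F, x != 0 -> y != 0 -> x + y != 0 -> Num.min (v x) (v y) <= v (x + y).

Lemma v1 (F : fieldType) (v : F -> int) : vmulP v -> v 1 = 0.
Proof. move=> hm; have := hm 1 1 (oner_neq0 _) (oner_neq0 _); rewrite mulr1; lia. Qed.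

Lemma vN1 (F : fieldType) (v : F -> int) : vmulP v -> v (-1) = 0.
Proof.
move=> hm; have h1 : (-1 : F) != 0 by rewrite oppr_eq0 oner_neq0.
have := hm _ _ h1 h1; rewrite mulrNN mulr1 (v1 hm); lia.
Qed.

Lemma vN (F : fieldType) (v : F -> int) x : vmulP v -> x != 0 -> v (- x) = v x.
Proof.
move=> hm hx; have h1 : (-1 : F) != 0 by rewrite oppr_eq0 oner_neq0.
by rewrite -mulN1r hm // (vN1 hm) add0r.
Qed.

Lemma inO0 (F : fieldType) (v : F -> int) : @inO F v 0. Proof. by rewrite /inO eqxx. Qed.
Lemma inP0 (F : fieldType) (v : F -> int) : @inP F v 0. Proof. by rewrite /inP eqxx. Qed.
Lemma inO1 (F : fieldType) (v : F -> int) : vmulP v -> @inO F v 1. Proof. by move=> hm; rewrite /inO (v1 hm) lexx orbT. Qed.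
Lemma inPO (F : fieldType) (v : F -> int) x : @inP F v x -> inO v x.
Proof. by rewrite /inP /inO => /orP[->//|h]; rewrite ltW ?orbT. Qed.

Lemma inON (F : fieldType) (v : F -> int) x : vmulP v -> @inO F v x -> inO v (- x).
Proof. move=> hm; rewrite /inO oppr_eq0; case: (eqVneq x 0) => //= hx; by rewrite (vN hm hx). Qed.

Lemma inOD (F : fieldType) (v : F -> int) x y : vminP v -> @inO F v x -> inO v y -> inO v (x + y).
Proof.
move=> hn; rewrite /inO; case: (eqVneq x 0) => [->|hx]; first by rewrite add0r.
case: (eqVneq y 0) => [->|hy]; first by rewrite addr0 (negPf hx).
case: (eqVneq (x + y) 0) => //= hxy hvx hvy.
have := hn _ _ hx hy hxy; move: hvx hvy; rewrite /Num.min; case: ifP => _; lia.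
Qed.

Lemma inPD (F : fieldType) (v : F -> int) x y : vminP v -> @inP F v x -> inP v y -> inP v (x + y).
Proof.
move=> hn; rewrite /inP; case: (eqVneq x 0) => [->|hx]; first by rewrite add0r.
case: (eqVneq y 0) => [->|hy]; first by rewrite addr0 (negPf hx).
case: (eqVneq (x + y) 0) => //= hxy hvx hvy.
have := hn _ _ hx hy hxy; move: hvx hvy; rewrite /Num.min; case: ifP => _; lia.
Qed.

Lemma inOM (F : fieldType) (v : F -> int) x y : vmulP v -> @inO F v x -> inO v y -> inO v (x * y).
Proof.
move=> hm; rewrite /inO mulf_eq0; case: (eqVneq x 0) => //= hx.
case: (eqVneq y 0) => //= hy hvx hvy; rewrite hm //; lia.
Qed.

Lemma inOPM (F : fieldType) (v : F -> int) x y : vmulP v -> @inO F v x -> inP v y -> inP v (x * y).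
Proof.
move=> hm; rewrite /inO /inP mulf_eq0; case: (eqVneq x 0) => //= hx.
case: (eqVneq y 0) => //= hy hvx hvy; rewrite hm //; lia.
Qed.

Lemma inO_sum (F : fieldType) (v : F -> int) (I : Type) (r : seq I) (P : pred I) (f : I -> F) :
  vminP v -> (forall i, P i -> inO v (f i)) -> inO v (\sum_(i <- r | P i) f i).
Proof. move=> hn h; apply: (big_ind (fun x => inO v x)) => //; [exact: inO0| move=> ? ?; exact: inOD]. Qed.

Lemma inP_sum (F : fieldType) (v : F -> int) (I : Type) (r : seq I) (P : pred I) (f : I -> F) :
  vminP v -> (forall i, P i -> inP v (f i)) -> inP v (\sum_(i <- r | P i) f i).
Proof. move=> hn h; apply: (big_ind (fun x => inP v x)) => //; [exact: inP0| move=> ? ?; exact: inPD]. Qed.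

Lemma red0 (F : fieldType) (v : F -> int) (k : fieldType) (red : F -> k) :
  (forall x y, inO v x -> inO v y -> red (x + y) = red x + red y) -> red 0 = 0.
Proof.
move=> hD; have := hD 0 0 (inO0 _) (inO0 _); rewrite addr0 => h.
by apply: (addrI (red 0)); rewrite addr0 -h.
Qed.

Lemma red_sum (F : fieldType) (v : F -> int) (k : fieldType) (red : F -> k) (I : Type) (r : seq I) (P : pred I) (f : I -> F) :
  vminP v ->
  (forall x y, inO v x -> inO v y -> red (x + y) = red x + red y) ->
  (forall i, P i -> inO v (f i)) -> red (\sum_(i <- r | P i) f i) = \sum_(i <- r | P i) red (f i).
Proof.
move=> hn hD h.
suff [] : inO v (\sum_(i <- r | P i) f i) /\ red (\sum_(i <- r | P i) f i) = \sum_(i <- r | P i) red (f i) by [].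
apply: (big_ind2 (fun x y => inO v x /\ red x = y)).
- by split; [exact: inO0| exact: red0 hD].
- by move=> x1 x2 y1 y2 [h1 <-] [h2 <-]; split; [exact: inOD | exact: hD].
- by move=> i Pi; split; [exact: h|].
Qed.
Lemma cast_mulmx (R : pzRingType) n1 n2 (E : n1 = n2) (A B : 'M[R]_n1) :
  castmx (E, E) A *m castmx (E, E) B = castmx (E, E) (A *m B).
Proof. by case: n2 / E; rewrite !castmx_id. Qed.

Lemma cast_mulmxv (R : pzRingType) n1 n2 (E : n1 = n2) (A : 'M[R]_n1) (x : 'cV[R]_n1) :
  castmx (E, E) A *m castmx (E, erefl 1%N) x = castmx (E, erefl 1%N) (A *m x).
Proof. by case: n2 / E; rewrite !castmx_id. Qed.

Lemma cast_tr (R : Type) n1 n2 (E : n1 = n2) (A : 'M[R]_n1) :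
  (castmx (E, E) A)^T = castmx (E, E) A^T.
Proof. by case: n2 / E; rewrite !castmx_id. Qed.

Lemma cast_det (R : comPzRingType) n1 n2 (E : n1 = n2) (A : 'M[R]_n1) :
  \det (castmx (E, E) A) = \det A.
Proof. by case: n2 / E; rewrite !castmx_id. Qed.

Lemma cast_rank (R : fieldType) n1 n2 (E : n1 = n2) (A : 'M[R]_n1) :
  \rank (castmx (E, E) A) = \rank A.
Proof. by case: n2 / E; rewrite !castmx_id. Qed.

Lemma cast_1B (R : pzRingType) n1 n2 (E : n1 = n2) (A : 'M[R]_n1) :
  1%:M - castmx (E, E) A = castmx (E, E) (1%:M - A).
Proof. by case: n2 / E; rewrite !castmx_id. Qed.

Lemma cast_inj (R : Type) m1 m2 n1 n2 (E : (m1 = m2) * (n1 = n2)) (A B : 'M[R]_(m1, n1)) :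
  castmx E A = castmx E B -> A = B.
Proof. by case: E => E1 E2; case: m2 / E1; case: n2 / E2; rewrite !castmx_id. Qed.

Lemma cast_surj (R : Type) m1 m2 n1 n2 (E : (m1 = m2) * (n1 = n2)) (B : 'M[R]_(m2, n2)) :
  exists A, B = castmx E A.
Proof. by case: E => E1 E2; case: m2 / E1 B; case: n2 / E2 => B; exists B; rewrite castmx_id. Qed.

Lemma ord_cast_surj n1 n2 (E : n1 = n2) (i : 'I_n2) : exists j : 'I_n1, i = cast_ord E j.
Proof. by exists (cast_ord (esym E) i); rewrite cast_ordKV. Qed.

Definition blk3 (R : Type) a n c
  (A11 : 'M[R]_(a, a)) (A12 : 'M[R]_(a, n)) (A13 : 'M[R]_(a, c))
  (A21 : 'M[R]_(n, a)) (A22 : 'M[R]_(n, n)) (A23 : 'M[R]_(n, c))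
  (A31 : 'M[R]_(c, a)) (A32 : 'M[R]_(c, n)) (A33 : 'M[R]_(c, c)) : 'M[R]_(a + (n + c)) :=
  block_mx A11 (row_mx A12 A13) (col_mx A21 A31) (block_mx A22 A23 A32 A33).

Definition col3 (R : Type) a n c (x1 : 'cV[R]_a) (x2 : 'cV[R]_n) (x3 : 'cV[R]_c) : 'cV[R]_(a + (n + c)) :=
  col_mx x1 (col_mx x2 x3).

Lemma mul_blk3 (R : pzRingType) a n c A11 A12 A13 A21 A22 A23 A31 A32 A33
   B11 B12 B13 B21 B22 B23 B31 B32 B33 :
  @blk3 R a n c A11 A12 A13 A21 A22 A23 A31 A32 A33 *m
  @blk3 R a n c B11 B12 B13 B21 B22 B23 B31 B32 B33 =
  blk3 (A11 *m B11 + A12 *m B21 + A13 *m B31) (A11 *m B12 + A12 *m B22 + A13 *m B32)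
       (A11 *m B13 + A12 *m B23 + A13 *m B33)
       (A21 *m B11 + A22 *m B21 + A23 *m B31) (A21 *m B12 + A22 *m B22 + A23 *m B32)
       (A21 *m B13 + A22 *m B23 + A23 *m B33)
       (A31 *m B11 + A32 *m B21 + A33 *m B31) (A31 *m B12 + A32 *m B22 + A33 *m B32)
       (A31 *m B13 + A32 *m B23 + A33 *m B33).
Proof.
rewrite /blk3 mulmx_block mul_row_col mul_mx_row mul_row_block mul_col_mx mul_col_row.
rewrite mul_block_col mulmx_block add_row_mx add_col_mx add_block_mx.
by rewrite !addrA.
Qed.

Lemma mul_blk3_col3 (R : pzRingType) a n c A11 A12 A13 A21 A22 A23 A31 A32 A33 x1 x2 x3 :
  @blk3 R a n c A11 A12 A13 A21 A22 A23 A31 A32 A33 *m col3 x1 x2 x3 =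
  col3 (A11 *m x1 + A12 *m x2 + A13 *m x3) (A21 *m x1 + A22 *m x2 + A23 *m x3)
       (A31 *m x1 + A32 *m x2 + A33 *m x3).
Proof.
rewrite /blk3 /col3 mul_block_col mul_row_col mul_col_mx mul_block_col add_col_mx.
by rewrite !addrA.
Qed.

Lemma tr_blk3 (R : Type) a n c A11 A12 A13 A21 A22 A23 A31 A32 A33 :
  (@blk3 R a n c A11 A12 A13 A21 A22 A23 A31 A32 A33)^T =
  blk3 A11^T A21^T A31^T A12^T A22^T A32^T A13^T A23^T A33^T.
Proof. by rewrite /blk3 tr_block_mx tr_row_mx tr_col_mx tr_block_mx. Qed.

Definition revp (a : nat) : 'S_a := perm (@rev_ord_inj a).
Definition Pm (R : pzRingType) a : 'M[R]_a := perm_mx (revp a).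

Lemma revpV a : ((revp a)^-1)%g = revp a.
Proof.
apply/eqP; rewrite eq_invg_mul; apply/eqP/permP => i.
by rewrite permM !permE /= rev_ordK.
Qed.

Lemma Pm_mul (R : pzRingType) a : Pm R a *m Pm R a = 1%:M.
Proof.
rewrite /Pm -perm_mxM -[X in (_ * X)%g]revpV mulgV perm_mx1 //.
Qed.

Lemma Pm_tr (R : pzRingType) a : (Pm R a)^T = Pm R a.
Proof. by rewrite /Pm tr_perm_mx revpV. Qed.

Lemma Pm_unit (R : comUnitRingType) a : Pm R a \in unitmx.
Proof. by case: (mulmx1_unit (Pm_mul R a)). Qed.

Lemma PmE (R : pzRingType) a (i j : 'I_a) : Pm R a i j = (rev_ord i == j)%:R.
Proof. by rewrite /Pm /perm_mx /row_perm !mxE permE. Qed.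

Lemma antitrE (R : pzRingType) a (A : 'M[R]_a) : antitr A = Pm R a *m A^T *m Pm R a.
Proof.
rewrite /Pm -row_permE -[X in _ *m perm_mx X]revpV -col_permE.
by apply/matrixP => i j; rewrite !mxE !permE.
Qed.

Lemma antitr_mul (R : comPzRingType) a (A B : 'M[R]_a) :
  antitr A *m antitr B = antitr (B *m A).
Proof.
by rewrite !antitrE trmx_mul !mulmxA -(mulmxA _ (Pm R a) (Pm R a)) Pm_mul mulmx1.
Qed.

Lemma antitr1 (R : pzRingType) a : antitr (1%:M : 'M[R]_a) = 1%:M.
Proof. by rewrite antitrE trmx1 mulmx1 Pm_mul. Qed.

Lemma antitrB (R : pzRingType) a (A B : 'M[R]_a) : antitr (A - B) = antitr A - antitr B.
Proof. by apply/matrixP => i j; rewrite !mxE. Qed.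

Lemma det_antitr (R : comUnitRingType) a (A : 'M[R]_a) : \det (antitr A) = \det A.
Proof.
rewrite antitrE !det_mulmx det_tr mulrC mulrA -det_mulmx Pm_mul det1 mul1r //.
Qed.

Lemma rank_antitr (R : fieldType) a (A : 'M[R]_a) : \rank (antitr A) = \rank A.
Proof.
rewrite antitrE mxrankMfree; last by rewrite row_free_unit Pm_unit.
rewrite -mxrank_tr trmx_mul trmxK Pm_tr mxrankMfree ?mxrank_tr //.
by rewrite row_free_unit Pm_unit.
Qed.

Lemma antitr_map (R S : Type) (f : R -> S) a (A : 'M[R]_a) :
  map_mx f (antitr A) = antitr (map_mx f A).
Proof. by apply/matrixP => i j; rewrite !mxE. Qed.
Lemma mxdiag_mul (R : pzRingType) r (p : 'I_r -> nat) (B E : forall i, 'M[R]_(p i)) :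
  mxdiag B *m mxdiag E = mxdiag (fun i => B i *m E i).
Proof.
rewrite [X in _ *m X]/mxdiag mul_mxdiag_mxblock /mxdiag; apply: eq_mxblock => i j.
case: (eqVneq i j) => [<-|_]; first by rewrite !conform_mx_id.
by rewrite mulmx0.
Qed.

Lemma mxdiag_in (R : nmodType) r (p : 'I_r -> nat) (B : forall i, 'M[R]_(p i)) (P : R -> Prop) :
  P 0 -> (forall i k l, P (B i k l)) -> forall s t, P (mxdiag B s t).
Proof.
move=> P0 HB s t; rewrite /mxdiag /mxblock mxE.
move: (tagnat.sig2 s) (tagnat.sig2 t).
case: (eqVneq (tagnat.sig1 s) (tagnat.sig1 t)) => [e|ne] k l.
  move: l; rewrite -e => l; by rewrite conform_mx_id.
by rewrite mxE.
Qed.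

Lemma mxdiag_entry (R : nmodType) r (p : 'I_r -> nat) (B : forall i, 'M[R]_(p i)) i k l :
  exists s t, B i k l = mxdiag B s t.
Proof.
have := submxblock_diag B i; rewrite /submxblock => <-.
by rewrite mxE; eexists; eexists.
Qed.
Lemma ordeqE n (x y : 'I_n) : (x == y) = (val x == val y).
Proof. by []. Qed.

Lemma levi_blk3 (F : fieldType) a b (Cb : 'M[F]_a) (D : 'M[F]_(b.*2.+1)) :
  levi Cb D = castmx (levi_size a b, levi_size a b)
                (blk3 Cb 0 0 0 D 0 0 0 (antitr (invmx Cb))).
Proof. by rewrite /levi /blk3 row_mx0 col_mx0. Qed.

Ltac splitI I k := case: (split_ordP I) => k ->; [| case: (split_ordP k) => {}k ->].

Ltac blkE := rewrite ?block_mxEul ?block_mxEur ?block_mxEdl ?block_mxEdr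
  ?row_mxEl ?row_mxEr ?col_mxEu ?col_mxEd.

Lemma gram_blk3 (F : fieldType) a b :
  gram F (a + b) = castmx (levi_size a b, levi_size a b)
     (blk3 0 0 (Pm F a) 0 (gram F b) 0 (Pm F a) 0 0).
Proof.
apply/matrixP => i j.
have [I ->] := ord_cast_surj (levi_size a b) i.
have [J ->] := ord_cast_surj (levi_size a b) j.
rewrite castmxE !cast_ordK /blk3.
have iK : ((inord (a+b) : 'I_((a+b).*2.+1)) : nat) = (a+b)%N by rewrite inordK //; lia.
have iK' : ((inord b : 'I_(b.*2.+1)) : nat) = b by rewrite inordK //; lia.
splitI I k; splitI J l; do 3!blkE; rewrite ?PmE !mxE /= !ordeqE /= ?iK ?iK';
  have := ltn_ord k; have := ltn_ord l; move=> *;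
  repeat (case: eqP => /= ?); try lia; try done.
Qed.
Lemma liftE n (h : 'I_n) (i : 'I_n.-1) : val (lift h i) = bump h i.
Proof. by []. Qed.

Lemma levi_size2 (a b : nat) : (a + (b.*2 + a) = (a + b).*2)%N.
Proof. rewrite doubleD -!addnn; lia. Qed.

Ltac splitB I k := case: (split_ordP I) => k ->;
  [move: (ltn_ord k) => ? | case: (split_ordP k) => {}k ->; move: (ltn_ord k) => ?].

Lemma gbar_levi (F : fieldType) (k : finFieldType) (red : F -> k) (w : F) a b
  (Cb : 'M[F]_a) (D : 'M[F]_(b.*2.+1)) :
  w != 0 -> red 0 = 0 ->
  gbar red w (levi Cb D) = castmx (levi_size2 a b, levi_size2 a b)
    (block_mx (map_mx red Cb) 0 0
       (block_mx (gbar red w D) 0 0 (map_mx red (antitr (invmx Cb))))).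
Proof.
move=> hw r0; apply/matrixP => i j.
have [I ->] := ord_cast_surj (levi_size2 a b) i.
have [J ->] := ord_cast_surj (levi_size2 a b) j.
rewrite castmxE !cast_ordK [LHS]mxE levi_blk3 castmxE.
have iK : ((inord (a+b) : 'I_((a+b).*2.+1)) : nat) = (a+b)%N by rewrite inordK //; lia.
have iK' : ((inord b : 'I_(b.*2.+1)) : nat) = b by rewrite inordK //; lia.
move eI : (cast_ord _ (lift _ (cast_ord _ I))) => I'.
move eJ : (cast_ord _ (lift _ (cast_ord _ J))) => J'.
have hI : (bump (a+b) I = I')%N by rewrite -eI /= ?liftE iK.
have hJ : (bump (a+b) J = J')%N by rewrite -eJ /= ?liftE iK.
move: hI hJ; rewrite /blk3.
splitB I x; splitB J y; splitB I' x'; splitB J' y'; rewrite /= /bump => hI hJ;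
  try (exfalso; lia).
all: do 3!blkE; rewrite ?mxE ?mul0r ?r0 //.
all: try (have -> : x' = x by apply/val_inj => /=; lia).
all: try (have -> : y' = y by apply/val_inj => /=; lia).
all: try (have -> : x' = lift (inord b) x by apply/val_inj; rewrite /= ?liftE iK' /bump; lia).
all: try (have -> : y' = lift (inord b) y by apply/val_inj; rewrite /= ?liftE iK' /bump; lia).
all: rewrite /dsc /= ?liftE ?iK ?iK' /bump.
all: repeat case: ifP => ? ; try (exfalso; lia).
all: by rewrite ?mulr1 ?divr1 ?mulfK.
Qed.
Lemma inL_col3 (F : fieldType) (v : F -> int) a b (x1 : 'cV[F]_a) (x2 : 'cV[F]_(b.*2.+1)) (x3 : 'cV[F]_a) :
  inL v (castmx (levi_size a b, erefl 1%N) (col3 x1 x2 x3)) =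
  [&& [forall i, inO v (x1 i 0)], inL v x2 & [forall i, inP v (x3 i 0)]].
Proof.
rewrite /inL; apply/forallP/and3P => [H|[/forallP h1 /forallP h2 /forallP h3] I].
  split; apply/forallP => i.
  - have := H (cast_ord (levi_size a b) (lshift _ i)).
    rewrite castmxE !cast_ordK cast_ord_id /col3 col_mxEu /=.
    by case: ifP => // _; apply: inPO.
  - have := H (cast_ord (levi_size a b) (rshift a (lshift a i))).
    by rewrite castmxE !cast_ordK cast_ord_id /col3 col_mxEd col_mxEu /= ltn_add2l.
  - have := H (cast_ord (levi_size a b) (rshift a (rshift _ i))).
    rewrite castmxE !cast_ordK cast_ord_id /col3 col_mxEd col_mxEd /=.
    case: ifP => // h; move: (ltn_ord i) => ?; exfalso; lia.
have [J ->] := ord_cast_surj (levi_size a b) I.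
rewrite castmxE !cast_ordK cast_ord_id /col3.
splitB J z; do 2!rewrite ?col_mxEu ?col_mxEd /=.
- by case: ifP => h; [exact: h1 | exfalso; lia].
- by rewrite ltn_add2l; apply: h2.
- by case: ifP => h; [exfalso; lia | exact: h3].
Qed.

Lemma col3_surj (R : Type) a b (x : 'cV[R]_((a + b).*2.+1)) :
  exists x1 x2 x3, x = castmx (levi_size a b, erefl 1%N) (@col3 R a (b.*2.+1) a x1 x2 x3).
Proof.
have [y ->] := cast_surj (levi_size a b, erefl 1%N) x.
exists (usubmx y), (usubmx (dsubmx y)), (dsubmx (dsubmx y)).
by rewrite /col3 !vsubmxK.
Qed.

Lemma levi_mul_col3 (F : fieldType) a b (Cb : 'M[F]_a) (D : 'M[F]_(b.*2.+1)) x1 x2 x3 :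
  levi Cb D *m castmx (levi_size a b, erefl 1%N) (col3 x1 x2 x3) =
  castmx (levi_size a b, erefl 1%N)
    (col3 (Cb *m x1) (D *m x2) (antitr (invmx Cb) *m x3)).
Proof.
rewrite levi_blk3 cast_mulmxv mul_blk3_col3 !mul0mx.
by rewrite !(addr0, add0r).
Qed.

Lemma col3_inj (R : Type) a b x1 x2 x3 y1 y2 y3 :
  castmx (levi_size a b, erefl 1%N) (@col3 R a (b.*2.+1) a x1 x2 x3) =
  castmx (levi_size a b, erefl 1%N) (col3 y1 y2 y3) -> [/\ x1 = y1, x2 = y2 & x3 = y3].
Proof.
move/cast_inj; rewrite /col3 => /eq_col_mx [-> /eq_col_mx [-> ->]]; done.
Qed.
Lemma levi_SO (F : fieldType) a b (Cb : 'M[F]_a) (D : 'M[F]_(b.*2.+1)) :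
  Cb \in unitmx -> inSO D -> inSO (levi Cb D).
Proof.
move=> hC /andP[/eqP hD1 /eqP hD2]; apply/andP; split; last first.
  rewrite levi_blk3 cast_det /blk3 row_mx0 col_mx0 !det_ublock hD2 det_antitr det_inv.
  rewrite mul1r mulfV //; by move: hC; rewrite unitmxE unitfE.
apply/eqP; rewrite levi_blk3 cast_tr gram_blk3 !cast_mulmx; congr (castmx _ _).
rewrite tr_blk3 !mul_blk3 !(mul0mx, mulmx0, addr0, add0r, trmx0) hD1.
congr blk3.
  by rewrite antitrE !mulmxA -(mulmxA _ (Pm F a) (Pm F a)) Pm_mul mulmx1 -trmx_mul mulVmx // trmx1 mul1mx.
rewrite antitrE !trmx_mul trmxK Pm_tr !mulmxA -(mulmxA _ (Pm F a) (Pm F a)) Pm_mul mulmx1.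
by rewrite -mulmxA mulVmx // mulmx1.
Qed.

Lemma invmx_uniq' (R : comUnitRingType) n (A B : 'M[R]_n) : A *m B = 1%:M -> invmx A = B.
Proof.
move=> h; have [hA _] := mulmx1_unit h.
by rewrite -[invmx A]mulmx1 -h mulmxA mulVmx ?mul1mx.
Qed.

Lemma blockdiag_inv (F : fieldType) r (p : 'I_r -> nat) (C : forall i, 'M[F]_(p i)) :
  (forall i, C i \in unitmx) ->
  blockdiag C *m mxdiag (fun i => invmx (C i)) = 1%:M.
Proof.
move=> hC; rewrite /blockdiag mxdiag_mul.
under eq_mxdiag do rewrite mulmxV ?hC //.
exact: mxdiagZ.
Qed.

Lemma GLO_blockdiag (F : fieldType) (v : F -> int) r (p : 'I_r -> nat) (C : forall i, 'M[F]_(p i)) :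
  vmulP v -> (forall i, C i \in unitmx) ->
  inGLO v (blockdiag C) <-> (forall i, inGLO v (C i)).
Proof.
move=> hm hC; have hI := blockdiag_inv hC.
have hinv := invmx_uniq' hI.
split.
  case=> hu hO hOi i; split => // k l.
    by have [s [t ->]] := @mxdiag_entry _ _ _ C i k l; apply: hO.
  have [s [t ->]] := @mxdiag_entry _ _ _ (fun i => invmx (C i)) i k l.
  by rewrite -hinv; apply: hOi.
move=> hG; split.
- by case: (mulmx1_unit hI).
- by apply: (@mxdiag_in _ _ _ C (fun x => inO v x)); [exact: inO0 | move=> i k l; case: (hG i)].
- rewrite hinv; apply: (@mxdiag_in _ _ _ _ (fun x => inO v x)); [exact: inO0 | move=> i k l; by case: (hG i)].
Qed.
Lemma red_mul_inv (F : fieldType) (v : F -> int) (k : fieldType) (red : F -> k) n (A B : 'M[F]_n) :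
  vminP v ->
  red 1 = 1 ->
  (forall x y, inO v x -> inO v y -> red (x + y) = red x + red y) ->
  (forall x y, inO v x -> inO v y -> red (x * y) = red x * red y) ->
  vmulP v ->
  (forall i j, inO v (A i j)) -> (forall i j, inO v (B i j)) ->
  A *m B = 1%:M -> map_mx red A *m map_mx red B = 1%:M.
Proof.
move=> hn r1 hD hM hm hA hB hAB; apply/matrixP => i j.
have r0 := red0 hD.
transitivity (red ((A *m B) i j)).
  rewrite !mxE (red_sum _ hn hD); last by move=> l _; apply: inOM.
  by apply: eq_bigr => l _; rewrite !mxE hM.
by rewrite hAB !mxE; case: (i == j) => /=; rewrite ?r1 ?r0.
Qed.

Lemma alpha_levi (F : fieldType) (v : F -> int) (k : finFieldType) (red : F -> k) (w : F) a b
  (Cb : 'M[F]_a) (D : 'M[F]_(b.*2.+1)) :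
  vmulP v -> vminP v -> w != 0 -> red 1 = 1 ->
  (forall x y, inO v x -> inO v y -> red (x + y) = red x + red y) ->
  (forall x y, inO v x -> inO v y -> red (x * y) = red x * red y) ->
  Cb \in unitmx -> (forall i j, inO v (Cb i j)) -> (forall i j, inO v (invmx Cb i j)) ->
  alpha_trivial red w (levi Cb D) = alpha_trivial red w D.
Proof.
move=> hm hn hw r1 hD hM hu hO hOi.
have r0 := red0 hD.
set M := map_mx red Cb; set N := map_mx red (invmx Cb).
have hNM : N *m M = 1%:M by apply: (red_mul_inv hn) => //; rewrite mulVmx.
have hMN : M *m N = 1%:M by apply: (red_mul_inv hn) => //; rewrite mulmxV.
have hNu : N \in unitmx by case: (mulmx1_unit hNM).
rewrite /alpha_trivial gbar_levi // antitr_map -/N -/M.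
case: ifP => _.
  rewrite cast_1B cast_rank (scalar_mx_block a (b.*2 + a)) (scalar_mx_block b.*2 a).
  rewrite !opp_block_mx !add_block_mx !oppr0 ?subr0 !addr0 !rank_diag_block_mx.
  have -> : \rank (1%:M - antitr N) = \rank (1%:M - M).
    rewrite -[X in X - antitr N]antitr1 -antitrB rank_antitr.
    have -> : (1%:M - N) = (M - 1%:M) *m N by rewrite mulmxBl hMN mul1mx.
    by rewrite mxrankMfree ?row_free_unit // -opprB mxrank_opp.
  by rewrite addnCA addnn oddD odd_double addbF.
rewrite cast_det !det_ublock det_antitr mulrCA -det_mulmx hMN det1 mulr1 //.
Qed.
Lemma inL0 (F : fieldType) (v : F -> int) m : inL v (0 : 'cV[F]_(m.*2.+1)).
Proof. by apply/forallP => i; rewrite mxE; case: ifP => _; [exact: inO0 | exact: inP0]. Qed.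

Lemma inJ_levi (F : fieldType) (v : F -> int) a b (Cb : 'M[F]_a) (D : 'M[F]_(b.*2.+1)) :
  vmulP v -> vminP v -> Cb \in unitmx -> inSO D ->
  inJ v (levi Cb D) <-> inGLO v Cb /\ inJ v D.
Proof.
move=> hm hn hu hSO.
have E := levi_size a b.
have zO : forall n, [forall i : 'I_n, inO v ((0 : 'cV[F]_n) i 0)].
  by move=> n; apply/forallP => i; rewrite mxE inO0.
have zP : forall n, [forall i : 'I_n, inP v ((0 : 'cV[F]_n) i 0)].
  by move=> n; apply/forallP => i; rewrite mxE inP0.
have dO : forall j : 'I_a, [forall i, inO v ((delta_mx j (0 : 'I_1) : 'cV[F]_a) i 0)].
  move=> j; apply/forallP => i; rewrite mxE.
  by case: (_ && _); [exact: inO1 | exact: inO0].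
split.
  case=> _ hmap hsurj; split; first split => //.
  - move=> i j; have := hmap (castmx (levi_size a b, erefl 1%N) (col3 (delta_mx j 0) 0 0)).
    rewrite levi_mul_col3 !inL_col3 dO inL0 zP => /(_ isT) /and3P[/forallP h _ _].
    by have := h i; rewrite -colE mxE.
  - move=> i j.
    have hy : inL v (castmx (levi_size a b, erefl 1%N) (col3 (delta_mx j (0 : 'I_1)) (0 : 'cV[F]_(b.*2.+1)) (0 : 'cV[F]_a))).
      by rewrite inL_col3 dO inL0 zP.
    have [x [hx hGx]] := hsurj _ hy.
    have [x1 [x2 [x3 ex]]] := col3_surj x; subst x.
    move: hGx; rewrite levi_mul_col3 => /col3_inj [h1 _ _].
    move: hx; rewrite inL_col3 => /and3P[/forallP hx1 _ _].
    have := hx1 i; have -> : x1 = invmx Cb *m delta_mx j 0.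
      by rewrite -h1 mulmxA mulVmx // mul1mx.
    by rewrite -colE mxE.
  - split => // [y hy|y hy].
      have := hmap (castmx (levi_size a b, erefl 1%N) (col3 0 y 0)).
      by rewrite levi_mul_col3 !inL_col3 zO zP hy => /(_ isT) /and3P[].
    have hy' : inL v (castmx (levi_size a b, erefl 1%N) (col3 (0 : 'cV[F]_a) y (0 : 'cV[F]_a))).
      by rewrite inL_col3 zO zP hy.
    have [x [hx hGx]] := hsurj _ hy'.
    have [x1 [x2 [x3 ex]]] := col3_surj x; subst x.
    move: hGx; rewrite levi_mul_col3 => /col3_inj [_ h2 _].
    exists x2; split => //.
    by move: hx; rewrite inL_col3 => /and3P[].
case=> [[_ hCO hCiO] [_ hDmap hDsurj]]; split.
- exact: levi_SO.
- move=> x hx; have [x1 [x2 [x3 ex]]] := col3_surj x; subst x.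
  move: hx; rewrite levi_mul_col3 !inL_col3 => /and3P[/forallP h1 h2 /forallP h3].
  apply/and3P; split.
  + apply/forallP => i; rewrite mxE; apply: inO_sum hn _ => l _; exact: inOM.
  + exact: hDmap.
  + apply/forallP => i; rewrite mxE; apply: inP_sum hn _ => l _; apply: inOPM => //.
    by rewrite mxE.
- move=> y hy; have [y1 [y2 [y3 ey]]] := col3_surj y; subst y.
  move: hy; rewrite inL_col3 => /and3P[/forallP h1 h2 /forallP h3].
  have [x2 [hx2 ex2]] := hDsurj y2 h2.
  exists (castmx (levi_size a b, erefl 1%N) (col3 (invmx Cb *m y1) x2 (antitr Cb *m y3))).
  split.
  + rewrite inL_col3; apply/and3P; split => //.
    * apply/forallP => i; rewrite mxE; apply: inO_sum hn _ => l _; exact: inOM.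
    * apply/forallP => i; rewrite mxE; apply: inP_sum hn _ => l _; apply: inOPM => //.
      by rewrite mxE.
  + rewrite levi_mul_col3 !mulmxA mulmxV // mul1mx ex2 antitr_mul mulmxV // antitr1 mul1mx //.
Qed.
Theorem proposition3p5p3
  (F : fieldType) (v : F -> int) (k : finFieldType) (red : F -> k)
  (hF : nonarch_local_field_char0 v red)
  (w : F) (hw : w != 0 /\ v w = 1)
  (r : nat) (p : 'I_r -> nat) (hp : forall i, (0 < p i)%N) (nt : nat)
  (C : forall i : 'I_r, 'M[F]_(p i)) (hC : forall i, C i \in unitmx)
  (D : 'M[F]_(nt.*2.+1)) (hD : inSO D) :
  inJplus v red w (levi (blockdiag C) D) <->
  ((forall i, inGLO v (C i)) /\ inJplus v red w D).
Proof.
case: hF => _ [hm hn _] _ [r1 hDr hMr _ _].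
case: hw => hw0 _.
have hu : blockdiag C \in unitmx by case: (mulmx1_unit (blockdiag_inv hC)).
have hG := GLO_blockdiag hm hC.
split.
  case=> hJ hA; have [hGLO hJD] := (inJ_levi hm hn hu hD).1 hJ.
  split; first exact: hG.1.
  split => //; case: hGLO => _ hO hOi.
  by rewrite -(alpha_levi D hm hn hw0 r1 hDr hMr hu hO hOi).
case=> hCi [hJD hAD]; have hGLO := hG.2 hCi.
split; first exact: (inJ_levi hm hn hu hD).2.
case: hGLO => _ hO hOi.
by rewrite (alpha_levi D hm hn hw0 r1 hDr hMr hu hO hOi).
Qed.
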